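(* There is $p_0$ such that for every prime $p>p_0$ with $p\equiv 1\pmod 3$ and every set $A\subseteq\mathbb{Z}_p$ with $|A|=(2p+1)/3$, one has $\Lambda_3(A)>0.23$.
   Context: For $f:\mathbb{Z}_p\to\mathbb{C}$, $\Lambda_3(f)=\frac{1}{p^2}\sum_{n,d\in\mathbb{Z}_p} f(n)f(n+d)f(n+2d)$; a set is identified with its indicator function. *)

(* Defs.v *)
From mathcomp Require Import all_boot all_order all_algebra.
Set Implicit Arguments. Unset Strict Implicit. Unset Printing Implicit Defensive.
Import GRing.Theory Num.Theory.

(* Z_p is modelled as 'I_p (residues 0..p-1) with arithmetic mod p.
   A set A ⊆ Z_p is identified with its indicator function. *)

Definition inZp (p : nat) (A : {set 'I_p}) (x : nat) : bool :=
  [exists a in A, (a : nat) == x %% p].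

Definition ap3_count (p : nat) (A : {set 'I_p}) : nat :=
  #|[set nd : 'I_p * 'I_p |
      [&& inZp A nd.1, inZp A (nd.1 + nd.2) & inZp A (nd.1 + 2 * nd.2)]]|.

(* Lambda_3(1_A) = p^{-2} sum_{n,d} 1_A(n) 1_A(n+d) 1_A(n+2d) *)
Definition Lambda3 (p : nat) (A : {set 'I_p}) : rat :=
  (ap3_count A)%:R / (p ^ 2)%:R.

(* Main.v *)
Require Import Defs.
From mathcomp Require Import all_boot all_order all_algebra.
From mathcomp Require Import ring zify.
Import GRing.Theory Num.Theory.
Local Open Scope ring_scope.
Definition fB (q : nat) (B : {set 'I_q.+2}) (e : 'I_q.+2) : nat :=
  #|[set w in B | w + e \in B]|.

Arguments fB {q}.

Lemma fB_le q (B : {set 'I_q.+2}) e : (fB B e <= #|B|)%N.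
Proof. by apply: subset_leq_card; apply/subsetP=> w; rewrite inE => /andP[]. Qed.

Lemma fB0 q (B : {set 'I_q.+2}) : fB B 0 = #|B|.
Proof. by apply: eq_card => w; rewrite inE addr0 andbb. Qed.

Lemma lip q (B : {set 'I_q.+2}) (e1 c : 'I_q.+2) :
  (fB B e1 <= fB B (e1 + c)%R + (#|B| - fB B c))%N.
Proof.
rewrite /fB.
set X := [set w in B | w + e1 \in B].
set Y := [set w | w + (e1 + c) \in B].
rewrite -(cardsID Y X) leq_add //.
  apply: subset_leq_card; apply/subsetP=> w; rewrite !inE => /andP[/andP[wB _] wY].
  by rewrite wB.
have H1 : #|X :\: Y| = #|[set w + e1 | w in X :\: Y]| by rewrite card_imset //; apply: addIr.
rewrite H1.
have H2 : #|[set v in B | v + c \notin B]| = (#|B| - #|[set w in B | (w + c)%R \in B]|)%N.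
  rewrite -(cardsID [set w | w + c \in B] B).
  have -> : B :&: [set w | w + c \in B] = [set w in B | w + c \in B].
    by apply/setP=> w; rewrite !inE.
  have -> : B :\: [set w | w + c \in B] = [set w in B | w + c \notin B].
    by apply/setP=> w; rewrite !inE andbC.
  by rewrite addKn.
rewrite -H2; apply: subset_leq_card; apply/subsetP=> v /imsetP[w].
rewrite !inE => /andP[wY /andP[wB we]] ->.
by rewrite we -addrA.
Qed.

Lemma sum_fB q (B : {set 'I_q.+2}) : (\sum_(e : 'I_q.+2) fB B e = #|B| * #|B|)%N.
Proof.
rewrite /fB.
under eq_bigr => e _ do rewrite -sum1_card.
rewrite (exchange_big_dep (fun w => w \in B)) /=; last by move=> e w _; rewrite inE => /andP[].
rewrite -sum_nat_const; apply: eq_bigr=> w wB.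
rewrite (eq_bigl (fun e => e \in [set e | w + e \in B])); last first.
  by move=> e; rewrite !inE wB.
rewrite sum1_card.
have -> : [set e | w + e \in B] = (fun e => w + e) @^-1: B by apply/setP=> e; rewrite !inE.
by rewrite card_preimset //; apply: addrI.
Qed.

Arguments lip {q}. Arguments sum_fB {q}. Arguments fB_le {q}. Arguments fB0 {q}.

Lemma unit_nz q (c : 'I_q.+2) : prime q.+2 -> c != 0 -> c \is a GRing.unit.
Proof.
move=> pr cn0.
have v0 : (0 < val c)%N.
  rewrite lt0n; by apply: contra cn0 => /eqP h; apply/eqP/val_inj.
have h : coprime q.+2 (val c).
  rewrite prime_coprime //; apply/negP => /(dvdn_leq v0); rewrite leqNgt ltn_ord.
  done.
have := @unitZpE q.+2 (val c) isT. rewrite h.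
change (((val c)%:R : 'I_q.+2) \is a GRing.unit -> c \is a GRing.unit). by rewrite natr_Zp.
Qed.

Lemma exists_good q (B : {set 'I_q.+2}) :
  prime q.+2 -> q.+2 = (3 * #|B| + 1)%N ->
  exists e, (#|B| - 1 <= 3 * fB B e <= 2 * #|B|)%N.
Proof.
move=> pr hp.
set k := #|B|.
have k1 : (1 <= k)%N by lia.
have hsum := sum_fB B.
case: (boolP [exists c : 'I_q.+2, (c != 0) && (2 * k < 3 * fB B c)%N]).
  move=> /existsP[c /andP[cn0 hc]].
  have cu := unit_nz _ c pr cn0.
  have [e0 he0] : exists e0 : 'I_q.+2, (3 * fB B e0 <= 2 * k)%N.
    case: (boolP [exists e0 : 'I_q.+2, (3 * fB B e0 <= 2 * k)%N]) => [/existsP //|].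
    rewrite negb_exists => /forallP hall.
    have : (\sum_(e : 'I_q.+2) (2 * k).+1 <= \sum_(e : 'I_q.+2) 3 * fB B e)%N.
      by apply: leq_sum => e _; move: (hall e); rewrite -ltnNge.
    rewrite -big_distrr /= hsum sum_nat_const card_ord -/k.
    lia.
  have walk : forall j, (3 * fB B (c *+ j) <= 2 * k)%N ->
      exists e, (k - 1 <= 3 * fB B e <= 2 * k)%N.
    elim=> [|j IH].
      by rewrite mulr0n fB0 -/k; lia.
    move=> hj.
    case: (leqP (3 * fB B (c *+ j)) (2 * k)) => hj'; first exact: IH.
    exists (c *+ j.+1); rewrite hj andbT.
    have := lip B (c *+ j) c; rewrite -mulrSr.
    have := fB_le B c; rewrite -/k.
    move: hj' hc; set a := fB B (c *+ j); set b := fB B (c *+ j.+1); set d := fB B c. clearbody a b d k. lia.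
  apply: (walk (val (e0 / c))).
  by rewrite -mulr_natr natr_Zp mulrC divrK.
rewrite negb_exists => /forallP hall.
have [c /andP[cn0 hc]] : exists c : 'I_q.+2, (c != 0) && (k - 1 <= 3 * fB B c)%N.
  case: (boolP [exists c : 'I_q.+2, (c != 0) && (k - 1 <= 3 * fB B c)%N]) => [/existsP //|].
  rewrite negb_exists => /forallP hall2.
  have hs := hsum; rewrite (bigD1 (0:'I_q.+2)%R) //= fB0 -/k in hs.
  have hle : (\sum_(e : 'I_q.+2 | e != 0%R) (3 * fB B e + 1) <= \sum_(e : 'I_q.+2 | e != 0%R) (k - 1))%N.
    apply: leq_sum => e en0; move: (hall2 e); rewrite en0 /= -ltnNge.
    lia.
  rewrite sum_nat_const cardC1 card_ord in hle.
  rewrite big_split /= sum_nat_const cardC1 card_ord -big_distrr /= in hle.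
  rewrite -/k in hp; move: hs hle hp k1.
  set s' := (\sum_(e | e != (0:'I_q.+2)%R) fB B e)%N.
  clearbody k s'.
  move=> h1 h2 h3 h4; exfalso; nia.
exists c; rewrite hc /=.
by move: (hall c); rewrite cn0 /= -leqNgt.
Qed.

Lemma key q (B S : {set 'I_q.+2}) (e : 'I_q.+2) :
  (fB B e * (2 * #|B| - fB B e - #|S|) <=
    #|[set xz in setX B B | (xz.1 + xz.2)%R \notin S]|)%N.
Proof.
set B' := [set b in B | b + e \in B].
set Be := [set b + e | b in B].
set W := B :|: Be.
have cW : (#|W| + fB B e = 2 * #|B|)%N.
  have cBe : #|Be| = #|B| by rewrite card_imset //; apply: addIr.
  have cI : B :&: Be = [set b + e | b in B'].
    apply/setP => w; rewrite inE; apply/andP/imsetP.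
      by case=> wB /imsetP[b bB wbe]; exists b => //; rewrite inE bB -wbe wB.
    case=> b; rewrite inE => /andP[bB beB] ->; split => //; exact: imset_f.
  have cI' : #|B :&: Be| = fB B e by rewrite cI card_imset //; apply: addIr.
  have hle : (#|B :&: Be| <= #|B|)%N by apply: subset_leq_card; apply: subsetIl.
  rewrite /W cardsU cBe; lia.
set D := [set bw : 'I_q.+2 * 'I_q.+2 | [&& bw.1 \in B', bw.2 \in W & bw.1 + bw.2 \notin S]].
pose Phi := fun bw : 'I_q.+2 * 'I_q.+2 =>
  if bw.2 \in B then (bw.2, bw.1) else (bw.1 + e, bw.2 - e).
have injPhi : {in D &, injective Phi}.
  move=> [b1 w1] [b2 w2]; rewrite !inE /= /Phi /=.
  move=> /andP[/andP[b1B b1e] _] /andP[/andP[b2B b2e] _].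
  case: ifP => w1B; case: ifP => w2B.
  - by case=> -> ->.
  - by case=> e1 e2; move: b1e; rewrite e2 subrK w2B.
  - by case=> e1 e2; move: b2e; rewrite -e2 subrK w1B.
  - by move=> /pair_equal_spec[h1 h2]; rewrite (addIr e h1) (addIr (-e) h2).
have subP : Phi @: D \subset [set xz in setX B B | xz.1 + xz.2 \notin S].
  apply/subsetP => xz /imsetP[[b w]]; rewrite !inE /= => /andP[/andP[bB be] /andP[wW wS]] ->.
  rewrite /Phi /=; case: ifP => wB; rewrite ?inE /=.
    by rewrite wB bB addrC wS.
  move: wW; rewrite ?inE wB /= => /imsetP[b0 b0B wE].
  rewrite wE in wS *.
  rewrite be addrK b0B /=.
  by rewrite addrAC -addrA.
have cD : (fB B e * (#|W| - #|S|) <= #|D|)%N.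
  rewrite -[#|D|]sum1_card.
  rewrite (eq_bigl (fun bw => (bw.1 \in B') && ((bw.2 \in W) && (bw.1 + bw.2 \notin S)))); last first.
    by move=> bw; rewrite inE.
  rewrite -(pair_big_dep (fun b => b \in B') (fun b w => (w \in W) && (b + w \notin S)) (fun _ _ => 1%N)).
  rewrite /fB -/B' -sum_nat_const; apply: leq_sum => b _.
  rewrite (eq_bigl (fun w => w \in [set w in W | b + w \notin S])); last by move=> w; rewrite inE.
  rewrite sum1_card.
  have := cardsID ((fun w : 'I_q.+2 => (b + w)%R) @^-1: S) W.
  have -> : W :\: (fun w : 'I_q.+2 => (b + w)%R) @^-1: S = [set w in W | b + w \notin S].
    by apply/setP => w; rewrite !inE andbC.
  have : (#|W :&: (fun w : 'I_q.+2 => (b + w)%R) @^-1: S| <= #|S|)%N.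
    rewrite -(card_preimset S (addrI b)); apply: subset_leq_card; exact: subsetIr.
  move=> h1 <-; by rewrite leq_subLR leq_add2r.
have := card_in_imset injPhi.
have := subset_leq_card subP.
move=> h1 h2; have -> : (2 * #|B| - fB B e = #|W|)%N by lia.
apply: (leq_trans cD); by rewrite -h2.
Qed.

Lemma union3 (T : finType) (X Y Z : {set T}) :
  (#|X :|: Y :|: Z| + #|X :&: Y| + #|X :&: Z| + #|Y :&: Z| =
   #|X| + #|Y| + #|Z| + #|X :&: Y :&: Z|)%N.
Proof.
have h1 := cardsUI X Y.
have h2 := cardsUI (X :|: Y) Z.
have h3 := cardsUI (X :&: Z) (Y :&: Z).
rewrite setIUl in h2.
have e : X :&: Z :&: (Y :&: Z) = X :&: Y :&: Z.
  by apply/setP => x; rewrite !inE; do 3 case: (_ \in _).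
rewrite e in h3.
lia.
Qed.

Lemma arith k u : (k - 1 <= 3 * u <= 2 * k)%N -> (2 * k * k <= 9 * (u * (k - u)) + k + 1)%N.
Proof.
move=> /andP[h1 h2].
have [v ek] : exists v, k = (u + v)%N by exists (k - u)%N; lia.
rewrite ek addKn; rewrite ek in h1 h2.
have hv : (u <= 2 * v)%N by lia.
have hv2 : (v <= 2 * u + 1)%N by lia.
clear h1 h2 ek.
case: (leqP v (2 * u)) => hc.
  have [a ea] : exists a, (2 * v = u + a)%N by exists (2 * v - u)%N; lia.
  have [b eb] : exists b, (2 * u = v + b)%N by exists (2 * u - v)%N; lia.
  have E1 : ((2 * v) * (2 * u) = (u + a) * (v + b))%N by rewrite ea eb.
  have E2 : (u * (2 * u) = u * (v + b))%N by rewrite eb.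
  have E3 : (v * (2 * v) = v * (u + a))%N by rewrite ea.
  lia.
have -> : v = (2 * u + 1)%N by lia.
lia.
Qed.

Lemma inZpE q (A : {set 'I_q.+2}) (z : 'I_q.+2) x :
  val z = (x %% q.+2)%N -> Defs.inZp A x = (z \in A).
Proof.
move=> hz; apply/existsP/idP.
  case=> a /andP[aA /eqP ax].
  by have -> : z = a by apply: val_inj; rewrite /= hz; exact: esym ax.
by move=> zA; exists z; rewrite zA hz eqxx.
Qed.

Lemma inj_pair q (f : 'I_q.+2 * 'I_q.+2 -> 'I_q.+2 * 'I_q.+2) : injective f -> injective f.
Proof. by []. Qed.

Theorem mainTheorem11 :
  exists p0 : nat, forall p : nat,
    prime p -> (p0 < p)%N -> (p %% 3 = 1)%N ->
    forall A : {set 'I_p}, #|A| = ((2 * p + 1) %/ 3)%N ->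
      (23%:R / 100%:R : rat) < Lambda3 A.
Proof.
exists 0%N => p; case: p => [|[|q]] pr.
- by exfalso; have h := prime_gt1 pr; rewrite ltn0 in h.
- by exfalso; have h := prime_gt1 pr; rewrite ltnn in h.
move=> _ p3 A cA.
set B := ~: A.
have cB := cardsC A; rewrite card_ord -/B cA in cB.
have hp : q.+2 = (3 * #|B| + 1)%N by lia.
set k := #|B| in hp.
pose Z := 'I_q.+2.
set PA := [set nd : Z * Z | [&& nd.1 \in A, nd.1 + nd.2 \in A & nd.1 + nd.2 + nd.2 \in A]].
have hNA : ap3_count A = #|PA|.
  apply: eq_card => -[n d]; rewrite !inE /=.
  rewrite (@inZpE q A (n)) ?modn_small //.
  rewrite (@inZpE q A (n + d)) //.
  rewrite (@inZpE q A (n + d + d)) //.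
  by rewrite /= modnDml -addnA addnn -mul2n.
set E0 := [set nd : Z * Z | nd.1 \in B].
set E1 := [set nd : Z * Z | nd.1 + nd.2 \in B].
set E2 := [set nd : Z * Z | nd.1 + nd.2 + nd.2 \in B].
have hPA : PA = ~: (E0 :|: E1 :|: E2).
  apply/setP => -[n d]; rewrite !inE /=.
  by do 3 case: (_ \in A).
have cPA : (#|PA| + #|E0 :|: E1 :|: E2| = q.+2 * q.+2)%N.
  by rewrite hPA addnC cardsC card_prod card_ord.
have u2 : (2%:R : Z) \is a GRing.unit.
  have := @unitZpE q.+2 2 isT.
  have -> : coprime q.+2 2.
    rewrite prime_coprime //; apply/negP => /(dvdn_leq (isT : (0 < 2)%N)); lia.
  by [].
have inj2 : injective (fun d : Z => d + d).
  move=> d d' /= h; apply: (mulrI u2); rewrite !mulr_natl !mulr2n; exact: h.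
have cX : forall X Y : {set Z}, #|setX X Y| = (#|X| * #|Y|)%N by move=> X Y; rewrite cardsX.
have cT : #|[set: Z]| = q.+2 by rewrite cardsT card_ord.
have c0 : #|E0| = (k * q.+2)%N.
  have -> : E0 = setX B setT by apply/setP => -[n d]; rewrite !inE andbT.
  by rewrite cX cT.
have c1 : #|E1| = (k * q.+2)%N.
  have -> : E1 = (fun nd : Z * Z => (nd.1 + nd.2, nd.2)) @^-1: setX B setT.
    by apply/setP => -[n d]; rewrite !inE andbT.
  rewrite card_preimset ?cX ?cT //.
  by move=> [n d] [n' d'] /= /pair_equal_spec[h1 h2]; rewrite h2 in h1 *; rewrite (addIr _ h1).
have c2 : #|E2| = (k * q.+2)%N.
  have -> : E2 = (fun nd : Z * Z => (nd.1 + nd.2 + nd.2, nd.2)) @^-1: setX B setT.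
    by apply/setP => -[n d]; rewrite !inE andbT.
  rewrite card_preimset ?cX ?cT //.
  move=> [n d] [n' d'] /= /pair_equal_spec[h1 h2]; rewrite h2 in h1 *.
  by rewrite (addIr _ (addIr _ h1)).
have c01 : #|E0 :&: E1| = (k * k)%N.
  have -> : E0 :&: E1 = (fun nd : Z * Z => (nd.1, nd.1 + nd.2)) @^-1: setX B B.
    by apply/setP => -[n d]; rewrite !inE.
  rewrite card_preimset ?cX //.
  by move=> [n d] [n' d'] /= /pair_equal_spec[h1 h2]; rewrite h1 in h2 *; rewrite (addrI _ h2).
have g02inj : injective (fun nd : Z * Z => (nd.1, nd.1 + nd.2 + nd.2)).
  move=> [n d] [n' d'] /= /pair_equal_spec[h1 h2]; rewrite h1 in h2 *.
  by rewrite -!addrA in h2; rewrite (inj2 _ _ (addrI _ h2)).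
have c02 : #|E0 :&: E2| = (k * k)%N.
  have -> : E0 :&: E2 = (fun nd : Z * Z => (nd.1, nd.1 + nd.2 + nd.2)) @^-1: setX B B.
    by apply/setP => -[n d]; rewrite !inE.
  by rewrite card_preimset ?cX.
have c12 : #|E1 :&: E2| = (k * k)%N.
  have -> : E1 :&: E2 = (fun nd : Z * Z => (nd.1 + nd.2, nd.1 + nd.2 + nd.2)) @^-1: setX B B.
    by apply/setP => -[n d]; rewrite !inE.
  rewrite card_preimset ?cX //.
  move=> [n d] [n' d'] /= /pair_equal_spec[h1 h2]; rewrite h1 in h2.
  have hd := addrI _ h2; rewrite hd in h1 *; by rewrite (addIr _ h1).
set S := [set y + y | y in B].
have cS : (#|S| <= k)%N by apply: leq_imset_card.
set Pin := [set xz in setX B B | xz.1 + xz.2 \in S].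
set Pout := [set xz in setX B B | (xz.1 + xz.2)%R \notin S].
have cPio : (#|Pin| + #|Pout| = k * k)%N.
  have e1 : Pin = setX B B :&: [set xz : Z * Z | xz.1 + xz.2 \in S].
    by apply/setP => xz; rewrite !inE.
  have e2 : Pout = setX B B :\: [set xz : Z * Z | xz.1 + xz.2 \in S].
    by apply/setP => xz; rewrite !inE andbC.
  by rewrite e1 e2 cardsID cX.
have cT3 : (#|E0 :&: E1 :&: E2| <= #|Pin|)%N.
  rewrite -(card_imset _ g02inj); apply: subset_leq_card.
  apply/subsetP => xz /imsetP[[n d]]; rewrite !inE /= => /andP[/andP[nB ndB] nddB] ->.
  rewrite ?inE /= nB nddB /=.
  have -> : n + (n + d + d) = (n + d) + (n + d) by ring.
  by apply/imsetP; exists (n + d); rewrite // inE.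
have [e he] := exists_good _ B pr hp.
have hkey := key _ B S e.
have hu := fB_le B e.
have har := arith _ _ he.
have hU := union3 _ E0 E1 E2.
rewrite -/k -/Pout in hkey; rewrite -/k in hu har.
have hmono : (fB B e * (k - fB B e) <= fB B e * (2 * k - fB B e - #|S|))%N.
  by apply: leq_mul => //; lia.
rewrite /Lambda3 hNA.
have fin : (23 * (q.+2 ^ 2) < #|PA| * 100)%N.
  rewrite -mulnn.
  have eNN : (q.+2 * q.+2 = (3 * k + 1) * (3 * k + 1))%N by rewrite {1 2}hp.
  have ekN : (k * q.+2 = k * (3 * k + 1))%N by rewrite {1}hp.
  move: eNN ekN hmono hkey har cPA cPio cT3 hU c0 c1 c2 c01 c02 c12.
  set u := fB B e; set X := (u * (k - u))%N.
  set Y := (u * (2 * k - u - #|S|))%N.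
  clearbody k X Y; lia.
have h0 : (0 : rat) < (q.+2 ^ 2)%:R by rewrite ltr0n expn_gt0.
have h100 : (0 : rat) < 100%:R by rewrite ltr0n.
rewrite (ltr_pdivlMr _ _ h0) mulrAC (ltr_pdivrMr _ _ h100) -!natrM ltr_nat.
exact: fin.
Qed.
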